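(* In ASD, let $(\beta^n,A_n)_{n:N}$ be an effective basis for $X$ and $(\gamma^m,D_m)_{m:M}$ an effective basis for $Y$. Then an effective basis for $X\times Y$, indexed by $N\times M$, is given by $$\epsilon^{(n,m)}=\lambda(x,y).\ \beta^nx\wedge\gamma^my,\qquad F_{(n,m)}=\lambda\theta:\Sigma^{X\times Y}.\ D_m\big(\lambda y.A_n(\lambda x.\theta(x,y))\big),$$ i.e. $\theta(x,y)\Leftrightarrow\exists(n,m).\ F_{(n,m)}\theta\wedge\epsilon^{(n,m)}(x,y)$ for every $\theta:\Sigma^{X\times Y}$.
   Context: ASD setting. $\mathcal S$ is a category with finite products and an object $\Sigma$ for which all exponentials $\Sigma^X$ exist; we reason in its simply typed $\lambda$-calculus (terms in a context $\Gamma$). $(\Sigma,\top,\bot,\wedge,\vee)$ is an internal distributive lattice, and each $\Sigma^X$ is a distributive lattice pointwise; on $\Sigma$ equality is written $\Leftrightarrow$. An object $N$ is overt discrete if it has an equality predicate $(=_N):N\times N\to\Sigma$ with $\Gamma\vdash n=m$ iff $\Gamma\vdash(n=_Nm)\Leftrightarrow\top$, and an existential quantifier $\exists_N:\Sigma^N\to\Sigma$ left adjoint to $\Sigma^{!}:\Sigma\to\Sigma^N$ (written $\exists n.\phi n$); products of overt discrete objects are overt discrete. Bases. An effective basis for $X$ indexed by an overt discrete $N$ is a pair of families $n:N\vdash\beta^n:\Sigma^X$ and $n:N\vdash A_n:\Sigma^{\Sigma^X}$ with $\phi=\lambda x.\exists n.\ A_n\phi\wedge\beta^nx$ for all $\phi:\Sigma^X$.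 *)

(* Defs.v *)
(* A shallow presentation of the ASD setting as an abstract
   category with finite products and exponentials Sigma^X, with the internal
   simply typed lambda-calculus rendered via generalized elements:
   a term  Gamma |- t : A  is a morphism  Hom Gamma A. *)

Record ASD := {
  Obj : Type;
  Hom : Obj -> Obj -> Type;
  idm : forall A, Hom A A;
  comp : forall {A B C}, Hom B C -> Hom A B -> Hom A C;
  comp_id_l : forall A B (f : Hom A B), comp (idm B) f = f;
  comp_id_r : forall A B (f : Hom A B), comp f (idm A) = f;
  comp_assoc : forall A B C D (h : Hom C D) (g : Hom B C) (f : Hom A B),
      comp h (comp g f) = comp (comp h g) f;
  one : Obj;
  bang : forall A, Hom A one;
  bang_uniq : forall A (f : Hom A one), f = bang A;
  prod : Obj -> Obj -> Obj;
  fst : forall {A B}, Hom (prod A B) A;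
  snd : forall {A B}, Hom (prod A B) B;
  pair : forall {G A B}, Hom G A -> Hom G B -> Hom G (prod A B);
  fst_pair : forall G A B (f : Hom G A) (g : Hom G B), comp fst (pair f g) = f;
  snd_pair : forall G A B (f : Hom G A) (g : Hom G B), comp snd (pair f g) = g;
  pair_uniq : forall G A B (h : Hom G (prod A B)),
      pair (comp fst h) (comp snd h) = h;
  Sig : Obj;
  exp : Obj -> Obj;
  eval : forall {X}, Hom (prod (exp X) X) Sig;
  curry : forall {G X}, Hom (prod G X) Sig -> Hom G (exp X);
  eval_curry : forall G X (f : Hom (prod G X) Sig),
      comp eval (pair (comp (curry f) fst) snd) = f;
  curry_uniq : forall G X (h : Hom G (exp X)),
      curry (comp eval (pair (comp h fst) snd)) = h;
  topS : Hom one Sig;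
  botS : Hom one Sig;
  meetS : Hom (prod Sig Sig) Sig;
  joinS : Hom (prod Sig Sig) Sig;
}.

Arguments Hom C _ _ : rename.
Arguments idm {C} A : rename.
Arguments comp {C A B D} _ _ : rename.
Arguments one {C} : rename.
Arguments bang {C} A : rename.
Arguments prod {C} _ _ : rename.
Arguments fst {C A B} : rename.
Arguments snd {C A B} : rename.
Arguments pair {C G A B} _ _ : rename.
Arguments Sig {C} : rename.
Arguments exp {C} _ : rename.
Arguments eval {C X} : rename.
Arguments curry {C G X} _ : rename.
Arguments topS {C} : rename.
Arguments botS {C} : rename.
Arguments meetS {C} : rename.
Arguments joinS {C} : rename.

Set Implicit Arguments.
Unset Strict Implicit.

Section Ops.
Variable C : ASD.

Definition tt (G : Obj C) : Hom C G Sig := comp topS (bang G).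
Definition ff (G : Obj C) : Hom C G Sig := comp botS (bang G).
Definition meet {G : Obj C} (a b : Hom C G Sig) : Hom C G Sig := comp meetS (pair a b).
Definition join {G : Obj C} (a b : Hom C G Sig) : Hom C G Sig := comp joinS (pair a b).
Definition app {G A : Obj C} (f : Hom C G (exp A)) (a : Hom C G A) : Hom C G Sig :=
  comp eval (pair f a).
Definition lam {G A : Obj C} (b : Hom C (prod G A) Sig) : Hom C G (exp A) := curry b.
Definition leS {G : Obj C} (a b : Hom C G Sig) : Prop := meet a b = a.

End Ops.

Definition distr_lattice (C : ASD) : Prop :=
  forall (G : Obj C) (a b c : Hom C G Sig),
    meet a b = meet b a /\ join a b = join b a /\
    meet a (meet b c) = meet (meet a b) c /\
    join a (join b c) = join (join a b) c /\
    meet a (join a b) = a /\ join a (meet a b) = a /\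
    meet a (tt G) = a /\ join a (ff G) = a /\
    meet a (join b c) = join (meet a b) (meet a c).

(* An overt discrete object N: an equality predicate and an existential
   quantifier exists_N : Sigma^N -> Sigma left adjoint to Sigma^! (internally),
   satisfying the Frobenius law. *)
Record overt_discrete (C : ASD) (N : Obj C) := {
  eqN : Hom C (prod N N) Sig;
  eqN_spec : forall (G : Obj C) (n m : Hom C G N),
      n = m <-> comp eqN (pair n m) = tt G;
  exN : Hom C (exp N) Sig;
  exN_adj : forall (G : Obj C) (phi : Hom C (prod G N) Sig) (s : Hom C G Sig),
      leS (comp exN (lam phi)) s <-> leS phi (comp s fst);
  exN_frob : forall (G : Obj C) (phi : Hom C (prod G N) Sig) (s : Hom C G Sig),
      meet (comp exN (lam phi)) s = comp exN (lam (meet phi (comp s fst)))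
}.

Definition ex {C : ASD} {N G : Obj C} (od : overt_discrete N)
  (phi : Hom C (prod G N) Sig) : Hom C G Sig := comp (exN od) (lam phi).

(* Effective basis (beta^n, A_n)_{n:N} for X:
   for all phi : Sigma^X (in any context G),
   phi = lambda x. exists n. A_n phi /\ beta^n x. *)
Definition effective_basis {C : ASD} {N X : Obj C} (od : overt_discrete N)
  (beta : Hom C N (exp X)) (A : Hom C N (exp (exp X))) : Prop :=
  forall (G : Obj C) (phi : Hom C G (exp X)),
    phi = lam (G := G) (A := X)
            (ex (G := prod G X) od
               (meet (app (comp A snd) (comp phi (comp fst fst)))
                     (app (comp beta snd) (comp snd fst)))).

Definition prod_basis_eps {C : ASD} {N M X Y : Obj C}
  (beta : Hom C N (exp X)) (gamma : Hom C M (exp Y)) :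
  Hom C (prod N M) (exp (prod X Y)) :=
  lam (G := prod N M) (A := prod X Y)
    (meet (app (comp beta (comp fst fst)) (comp fst snd))
          (app (comp gamma (comp snd fst)) (comp snd snd))).

Definition prod_basis_F {C : ASD} {N M X Y : Obj C}
  (A : Hom C N (exp (exp X))) (D : Hom C M (exp (exp Y))) :
  Hom C (prod N M) (exp (exp (prod X Y))) :=
  (* context C0 = (N x M) x Sigma^(X x Y), with nm = fst, theta = snd *)
  lam (G := prod N M) (A := exp (prod X Y))
    (app (comp D (comp snd fst))
       (lam (G := prod (prod N M) (exp (prod X Y))) (A := Y)
          (* context C0 x Y, y = snd *)
          (app (comp A (comp fst (comp fst fst)))
             (lam (G := prod (prod (prod N M) (exp (prod X Y))) Y) (A := X)
                (* context (C0 x Y) x X, x = snd, y = snd o fst,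
                   theta = snd o fst o fst *)
                (app (comp snd (comp fst fst))
                     (pair snd (comp snd fst))))))).

(* Main.v *)
Require Import Defs.
From Stdlib Require Import Setoid.
From Stdlib Require Import Setoid.
Set Implicit Arguments.

Section S.
Variable C : ASD.

Lemma pair_comp (G H A B : Obj C) (f : Hom C G A) (g : Hom C G B) (h : Hom C H G) :
  comp (pair f g) h = pair (comp f h) (comp g h).
Proof.
  rewrite <- (pair_uniq _ _ _ _ (comp (pair f g) h)).
  rewrite !comp_assoc, fst_pair, snd_pair. reflexivity.
Qed.

Lemma pair_fst_snd (A B : Obj C) : pair (@fst C A B) snd = idm _.
Proof. rewrite <- (pair_uniq _ _ _ _ (idm _)), !comp_id_r. reflexivity. Qed.

Lemma comp_assoc' (A B D E : Obj C) (h : Hom C D E) (g : Hom C B D) (f : Hom C A B) :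
  comp (comp h g) f = comp h (comp g f).
Proof. symmetry; apply (comp_assoc C). Qed.

Lemma meet_comp (G H : Obj C) (a b : Hom C G Sig) (h : Hom C H G) :
  comp (meet a b) h = meet (comp a h) (comp b h).
Proof. unfold meet. rewrite comp_assoc', pair_comp. reflexivity. Qed.

Lemma app_comp (G H A : Obj C) (f : Hom C G (exp A)) (a : Hom C G A) (h : Hom C H G) :
  comp (app f a) h = app (comp f h) (comp a h).
Proof. unfold app. rewrite comp_assoc', pair_comp. reflexivity. Qed.

Lemma beta_gen (G H A : Obj C) (b : Hom C (prod G A) Sig) (h : Hom C H G) (a : Hom C H A) :
  app (comp (lam b) h) a = comp b (pair h a).
Proof.
  unfold app, lam. rewrite <- (eval_curry _ _ _ b) at 2.
  rewrite comp_assoc', pair_comp, comp_assoc', fst_pair, snd_pair. reflexivity.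
Qed.

Lemma beta (G A : Obj C) (b : Hom C (prod G A) Sig) (a : Hom C G A) :
  app (lam b) a = comp b (pair (idm _) a).
Proof. rewrite <- beta_gen, comp_id_r. reflexivity. Qed.

Lemma lam_comp (G H A : Obj C) (b : Hom C (prod G A) Sig) (h : Hom C H G) :
  comp (lam b) h = lam (comp b (pair (comp h fst) snd)).
Proof.
  rewrite <- (curry_uniq _ _ _ (comp (lam b) h)). unfold lam. f_equal.
  fold (app (comp (comp (curry b) h) fst) snd).
  rewrite comp_assoc'. apply beta_gen.
Qed.

Lemma ex_comp (N G H : Obj C) (od : overt_discrete N) (phi : Hom C (prod G N) Sig) (h : Hom C H G) :
  comp (ex od phi) h = ex od (comp phi (pair (comp h fst) snd)).
Proof. unfold ex. rewrite comp_assoc', lam_comp. reflexivity. Qed.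

Lemma pair_uniq' (G A B : Obj C) (h : Hom C G (prod A B)) :
  pair (comp fst h) (comp snd h) = h.
Proof. apply (pair_uniq C). Qed.

End S.

Hint Rewrite comp_id_l comp_id_r comp_assoc' pair_comp fst_pair snd_pair meet_comp app_comp
  beta lam_comp ex_comp pair_fst_snd pair_uniq' : asd.

Section S2.
Variable C : ASD.
Hypothesis HL : distr_lattice C.

Lemma meet_idem (G : Obj C) (a : Hom C G Sig) : meet a a = a.
Proof.
  destruct (HL G a a a) as (_&_&_&_&_&Hb&_).
  destruct (HL G a (meet a a) a) as (_&_&_&_&Ha&_).
  rewrite <- Hb at 2. rewrite Ha. reflexivity.
Qed.

Lemma leS_refl (G : Obj C) (a : Hom C G Sig) : leS a a.
Proof. apply meet_idem. Qed.

Lemma leS_antisym (G : Obj C) (a b : Hom C G Sig) : leS a b -> leS b a -> a = b.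
Proof.
  unfold leS; intros H1 H2. destruct (HL G a b b) as (Hc&_).
  transitivity (meet a b). symmetry; exact H1. rewrite Hc; exact H2.
Qed.

Lemma leS_comp (G H : Obj C) (a b : Hom C G Sig) (h : Hom C H G) :
  leS a b -> leS (comp a h) (comp b h).
Proof. unfold leS; intro E. rewrite <- meet_comp, E. reflexivity. Qed.

Lemma ex_uniq (N G : Obj C) (od : overt_discrete N) (phi : Hom C (prod G N) Sig)
  (e : Hom C G Sig) :
  (forall s, leS e s <-> leS phi (comp s fst)) -> e = ex od phi.
Proof.
  intro He. apply leS_antisym.
  - apply He. apply (exN_adj od). apply leS_refl.
  - apply (exN_adj od). apply He. apply leS_refl.
Qed.

Lemma ex_le (N G : Obj C) (od : overt_discrete N) (phi : Hom C (prod G N) Sig) s :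
  leS (ex od phi) s <-> leS phi (comp s fst).
Proof. apply (exN_adj od). Qed.

Lemma ex_pair (N M K : Obj C) (odN : overt_discrete N) (odM : overt_discrete M)
  (odNM : overt_discrete (prod N M)) (Phi : Hom C (prod K (prod N M)) Sig) :
  ex odNM Phi = ex odN (ex odM (comp Phi (pair (comp fst fst) (pair (comp snd fst) snd)))).
Proof.
  symmetry. apply ex_uniq. intro s.
  rewrite ex_le, ex_le. split; intro H.
  - apply (fun HH => @leS_comp _ _ _ _ (pair (pair fst (comp fst snd)) (comp snd snd)) HH) in H.
    autorewrite with asd in H |- *. exact H.
  - apply (fun HH => @leS_comp _ _ _ _ (pair (comp fst fst) (pair (comp snd fst) snd)) HH) in H.
    autorewrite with asd in H |- *. exact H.
Qed.
End S2.
Lemma ex_frob' (C : ASD) (N G : Obj C) (od : overt_discrete N) (phi : Hom C (prod G N) Sig) s :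
  meet (ex od phi) s = ex od (meet phi (comp s fst)).
Proof. apply (exN_frob od). Qed.
Lemma meet_rearr (C : ASD) (HL : distr_lattice C) (G : Obj C) (a b c : Hom C G Sig) :
  meet (meet a b) c = meet a (meet c b).
Proof.
  destruct (HL G c b a) as (Hc&_). destruct (HL G a b c) as (_&_&Ha&_).
  rewrite Hc, Ha. reflexivity.
Qed.

Theorem lemma8p1 (C : ASD) (HL : distr_lattice C) (N M X Y : Obj C)
  (odN : overt_discrete N) (odM : overt_discrete M)
  (odNM : overt_discrete (prod N M))
  (beta : Hom C N (exp X)) (A : Hom C N (exp (exp X)))
  (gamma : Hom C M (exp Y)) (D : Hom C M (exp (exp Y))) :
  effective_basis odN beta A ->
  effective_basis odM gamma D ->
  effective_basis odNM (prod_basis_eps beta gamma) (prod_basis_F A D).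
Proof.
  intros hX hY G th.
  rewrite <- (curry_uniq _ _ _ th) at 1. unfold lam at 1. f_equal.
  fold (app (comp th fst) snd).

  set (phi1 := lam (G:=prod G (prod X Y)) (app (comp th (comp fst fst)) (pair snd (comp snd (comp snd fst))))).
  assert (S1 : app (comp th fst) snd = app phi1 (comp fst snd)).
  { unfold phi1. autorewrite with asd. reflexivity. }
  rewrite S1. rewrite (hX _ phi1) at 1. autorewrite with asd.
  set (phi2 := lam (G:=prod (prod G (prod X Y)) N) (app (comp A (comp snd fst)) (lam (app (comp th (comp fst (comp fst (comp fst fst)))) (pair snd (comp snd fst)))))).
  assert (S2 : app (comp A snd) (comp phi1 fst) = app phi2 (comp snd (comp snd fst))).
  { unfold phi1, phi2. autorewrite with asd. reflexivity. }
  rewrite S2, (hY _ phi2) at 1. autorewrite with asd.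
  rewrite ex_frob'. rewrite (@ex_pair C HL _ _ _ odN odM).
  unfold ex. f_equal. f_equal. f_equal. f_equal.
  unfold phi2, prod_basis_F, prod_basis_eps. autorewrite with asd.
  apply meet_rearr; exact HL.
Qed.
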